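(* Let $\mathbb{S}\in\mathbb{Z}^{N_X\times N_e}$, $\mathcal{X}=\mathbb{R}^{N_X}_{>0}$, and $\{\Psi^*_x\}_{x\in\mathcal{X}}$ a family of dissipation functions on $\mathbb{R}^{N_e}$ with conjugates $\Psi_x$. Fix $x\in\mathcal{X}$. Let $\tilde{\mathcal{T}}:=\mathrm{Im}\,\mathbb{S}\subset\mathbb{R}^{N_X}$ and $\tilde{\mathcal{T}}^*:=\mathbb{R}^{N_X}/\mathrm{Ker}\,\mathbb{S}^T$, paired by $\langle v,u\rangle$ (well defined since $\mathrm{Im}\,\mathbb{S}\perp\mathrm{Ker}\,\mathbb{S}^T$). For $v\in\tilde{\mathcal{T}}$ let $j^\dagger(x,v)$ be the unique minimizer of $\Psi_x(j)$ over $\{j\in\mathbb{R}^{N_e}:-\mathbb{S}j=v\}$, and define $$\tilde{\Psi}_x(v):=\Psi_x\big(j^\dagger(x,v)\big)\ (v\in\tilde{\mathcal{T}}),\qquad \tilde{\Psi}^*_x(u):=\Psi^*_x\big(-\mathbb{S}^Tu\big)\ (u\in\tilde{\mathcal{T}}^* ).$$ Then $\tilde{\Psi}_x$ and $\tilde{\Psi}^*_x$ are Legendre–Fenchel conjugates of each other, $\tilde{\Psi}_x(v)=\max_{u\in\tilde{\mathcal{T}}^*}[\langle v,u\rangle-\tilde{\Psi}^*_x(u)]$ and $\tilde{\Psi}^*_x(u)=\max_{v\in\tilde{\mathcal{T}}}[\langle v,u\rangle-\tilde{\Psi}_x(v)]$; their Legendre transformations $v\mapsto\partial\tilde{\Psi}_x(v)$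 and $u\mapsto\partial\tilde{\Psi}^*_x(u)$ are mutually inverse bijections between $\tilde{\mathcal{T}}$ and $\tilde{\mathcal{T}}^*$, where $u=\partial\tilde\Psi_x(v)$ is the class with $\nabla\Psi_x(j^\dagger(x,v))=-\mathbb{S}^Tu$ and $\partial\tilde\Psi^*_x(u)=-\mathbb{S}\nabla\Psi^*_x(-\mathbb{S}^Tu)$; and both $\tilde{\Psi}_x$ and $\tilde{\Psi}^*_x$ are dissipation functions (strictly convex, $1$-coercive, symmetric under sign change, and vanishing at $0$). That is, the dissipation functions on the edge spaces induce a dually flat structure on the restricted tangent and cotangent spaces $(\tilde{\mathcal{T}},\tilde{\mathcal{T}}^* )$.
   Context: A dissipation function on $\mathbb{R}^{N_e}$ is a strictly convex, continuously differentiable, $1$-coercive ($\psi(f)/\|f\|\to\infty$ as $\|f\|\to\infty$), even ($\psi(-f)=\psi(f)$) function $\psi$ with $\psi(0)=0$. $\Psi_x(j):=\max_f[\langle j,f\rangle-\Psi^*_x(f)]$ is the Legendre–Fenchel conjugate of $\Psi^*_x$ (also a dissipation function), and $\nabla\Psi_x,\nabla\Psi^*_x$ are mutually inverse bijections of $\mathbb{R}^{N_e}$. $\langle\cdot,\cdot\rangle$ is the standard pairing. *)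

(* Defs.v *)
From HB Require Import structures.
From mathcomp Require Import all_boot all_order all_algebra.
From mathcomp Require Import all_classical all_reals all_analysis.
From Stdlib Require Import ClassicalEpsilon.
Set Implicit Arguments. Unset Strict Implicit. Unset Printing Implicit Defensive.
Import Order.TTheory GRing.Theory Num.Theory.
Import numFieldNormedType.Exports.
Local Open Scope classical_set_scope.
Local Open Scope ring_scope.

Section Defs.
Variable R : realType.

Definition dotv n (a b : 'cV[R]_n) : R := \sum_(i < n) a i 0 * b i 0.

(* norm on R^n (max norm of MathComp-Analysis; all norms are equivalent) *)
Definition normv n (a : 'cV[R]_n) : R := `|a|.

Definition SR m n (S : 'M[int]_(m, n)) : 'M[R]_(m, n) := map_mx (fun z => z%:~R) S.

Definition ImS m n (S : 'M[int]_(m, n)) : set 'cV[R]_m :=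
  [set v | exists j : 'cV[R]_n, SR S *m j = v].

(* u ~ u' in R^m / Ker S^T *)
Definition equivT m n (S : 'M[int]_(m, n)) (u u' : 'cV[R]_m) : Prop :=
  (SR S)^T *m u = (SR S)^T *m u'.

Definition qnorm m n (S : 'M[int]_(m, n)) (u : 'cV[R]_m) : R :=
  inf [set r | exists k : 'cV[R]_m, (SR S)^T *m k = 0 /\ r = normv (u + k)].

Definition conj n (psi : 'cV[R]_n -> R) (j : 'cV[R]_n) : R :=
  sup (range (fun f => dotv j f - psi f)).

Definition is_gradient_on n (D : set 'cV[R]_n) (f : 'cV[R]_n -> R)
    (a g : 'cV[R]_n) : Prop :=
  forall eps : R, 0 < eps -> exists del : R, 0 < del /\
    forall h, D h -> normv h < del ->
      `|f (a + h) - f a - dotv g h| <= eps * normv h.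

Definition is_gradient n (f : 'cV[R]_n -> R) (a g : 'cV[R]_n) : Prop :=
  is_gradient_on setT f a g.

Definition continuous_map n (G : 'cV[R]_n -> 'cV[R]_n) : Prop :=
  forall a (eps : R), 0 < eps -> exists del : R, 0 < del /\
    forall b, normv (b - a) < del -> normv (G b - G a) < eps.

Definition strictly_convex_mod n (D : set 'cV[R]_n)
    (E : 'cV[R]_n -> 'cV[R]_n -> Prop) (f : 'cV[R]_n -> R) : Prop :=
  forall a b, D a -> D b -> ~ E a b -> forall t : R, 0 < t < 1 ->
    f (t *: a + (1 - t) *: b) < t * f a + (1 - t) * f b.

Definition coercive_on n (D : set 'cV[R]_n) (nrm : 'cV[R]_n -> R)
    (f : 'cV[R]_n -> R) : Prop :=
  forall M : R, exists r : R, forall z, D z -> r < nrm z -> M < f z / nrm z.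

Definition dissipation n (psi : 'cV[R]_n -> R) : Prop :=
  [/\ strictly_convex_mod setT (@eq _) psi,
      (exists G, continuous_map G /\ forall a, is_gradient psi a (G a)),
      coercive_on setT (@normv n) psi,
      (forall f, psi (- f) = psi f)
    & psi 0 = 0].

Definition is_jdag m n (S : 'M[int]_(m, n)) (psi : 'cV[R]_n -> R)
    (v : 'cV[R]_m) (j : 'cV[R]_n) : Prop :=
  - (SR S *m j) = v /\ forall j', - (SR S *m j') = v -> psi j <= psi j'.

(* j^dagger(x,v): the (unique, cf. the theorem) minimizer, chosen by epsilon *)
Definition jdag m n (S : 'M[int]_(m, n)) (psi : 'cV[R]_n -> R)
    (v : 'cV[R]_m) : 'cV[R]_n :=
  epsilon (inhabits 0) (is_jdag S psi v).

Definition tPsi m n (S : 'M[int]_(m, n)) (Psistar : 'cV[R]_n -> R)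
    (v : 'cV[R]_m) : R :=
  conj Psistar (jdag S (conj Psistar) v).

(* tilde Psi*_x (u) := Psi*_x (- S^T u)  (on representatives u of R^m/Ker S^T) *)
Definition tPsistar m n (S : 'M[int]_(m, n)) (Psistar : 'cV[R]_n -> R)
    (u : 'cV[R]_m) : R :=
  Psistar (- ((SR S)^T *m u)).

Definition dtPsistar m n (S : 'M[int]_(m, n)) (gradPsistar : 'cV[R]_n -> 'cV[R]_n)
    (u : 'cV[R]_m) : 'cV[R]_m :=
  - (SR S *m gradPsistar (- ((SR S)^T *m u))).

Definition is_dtPsi m n (S : 'M[int]_(m, n)) (Psistar : 'cV[R]_n -> R)
    (v u : 'cV[R]_m) : Prop :=
  is_gradient (conj Psistar) (jdag S (conj Psistar) v) (- ((SR S)^T *m u)).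

End Defs.

(* Main.v *)
Require Import Defs.
From HB Require Import structures.
From mathcomp Require Import all_boot all_order all_algebra.
From mathcomp Require Import all_classical all_reals all_analysis.
From mathcomp Require Import ring lra.
From Stdlib Require Import ClassicalEpsilon.
Set Implicit Arguments. Unset Strict Implicit. Unset Printing Implicit Defensive.
Import Order.TTheory GRing.Theory Num.Theory.
Import numFieldNormedType.Exports.
Local Open Scope classical_set_scope.
Local Open Scope ring_scope.

Ltac vecid := apply/matrixP => ? ?; rewrite !mxE; ring.

Section Aux.
Variable R : realType.
Local Notation V n := 'cV[R]_n.

Lemma dotvE n (a b : V n) : dotv a b = (a^T *m b) 0 0.
Proof. by rewrite /dotv !mxE; apply: eq_bigr => i _; rewrite mxE. Qed.

Lemma dotvC n (a b : V n) : dotv a b = dotv b a.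
Proof. by rewrite /dotv; apply: eq_bigr => i _; rewrite mulrC. Qed.

Lemma dotvDl n (a b c : V n) : dotv (a + b) c = dotv a c + dotv b c.
Proof. by rewrite /dotv -big_split; apply: eq_bigr => i _; rewrite mxE mulrDl. Qed.

Lemma dotvDr n (a b c : V n) : dotv c (a + b) = dotv c a + dotv c b.
Proof. by rewrite dotvC dotvDl !(dotvC c). Qed.

Lemma dotvZl n s (a b : V n) : dotv (s *: a) b = s * dotv a b.
Proof. by rewrite /dotv mulr_sumr; apply: eq_bigr => i _; rewrite mxE mulrA. Qed.

Lemma dotvZr n s (a b : V n) : dotv a (s *: b) = s * dotv a b.
Proof. by rewrite dotvC dotvZl dotvC. Qed.

Lemma dotvNl n (a b : V n) : dotv (- a) b = - dotv a b.
Proof. by rewrite -scaleN1r dotvZl mulN1r. Qed.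

Lemma dotvNr n (a b : V n) : dotv a (- b) = - dotv a b.
Proof. by rewrite dotvC dotvNl dotvC. Qed.

Lemma dotvBl n (a b c : V n) : dotv (a - b) c = dotv a c - dotv b c.
Proof. by rewrite dotvDl dotvNl. Qed.

Lemma dotvBr n (a b c : V n) : dotv c (a - b) = dotv c a - dotv c b.
Proof. by rewrite dotvDr dotvNr. Qed.

Lemma dotv0l n (a : V n) : dotv 0 a = 0.
Proof. by rewrite -(scale0r a) dotvZl mul0r. Qed.

Lemma dotv0r n (a : V n) : dotv a 0 = 0.
Proof. by rewrite dotvC dotv0l. Qed.

Lemma dotv_mul m n (M : 'M[R]_(m, n)) (a : V n) (b : V m) :
  dotv (M *m a) b = dotv a (M^T *m b).
Proof. by rewrite !dotvE trmx_mul mulmxA. Qed.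

Lemma dotv_delta n (a : V n) i : dotv a (delta_mx i 0) = a i 0.
Proof.
rewrite /dotv (bigD1 i) //= big1 ?addr0; first by rewrite mxE !eqxx mulr1.
by move=> k /negbTE kn; rewrite mxE kn mulr0.
Qed.

Lemma dotv_eq0 n (d : V n) : (forall w, dotv d w = 0) -> d = 0.
Proof.
by move=> H; apply/matrixP => i j; rewrite (ord1 j) mxE -dotv_delta H.
Qed.

Lemma normv_entry n (a : V n) i : `|a i 0| <= normv a.
Proof.
rewrite /normv (_ : `|a| = mx_norm a) // mx_normrE.
by apply/bigmax_geP; right => /=; exists (i, 0).
Qed.

Lemma normv_le n (a : V n) c : 0 <= c -> (forall i, `|a i 0| <= c) -> normv a <= c.
Proof.
move=> c0 H; rewrite /normv (_ : `|a| = mx_norm a) // mx_normrE.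
by apply/bigmax_leP; split => // -[i j] _ /=; rewrite (ord1 j).
Qed.

Lemma normv_ge0 n (a : V n) : 0 <= normv a.
Proof. exact: normr_ge0. Qed.

Lemma normvD n (a b : V n) : normv (a + b) <= normv a + normv b.
Proof. exact: ler_normD. Qed.

Lemma normvN n (a : V n) : normv (- a) = normv a.
Proof. exact: normrN. Qed.

Lemma normvZ n s (a : V n) : normv (s *: a) = `|s| * normv a.
Proof. exact: normrZ. Qed.

Lemma normv0 n : normv (0 : V n) = 0.
Proof. exact: normr0. Qed.

Lemma normv_eq0 n (a : V n) : (normv a == 0) = (a == 0).
Proof. exact: normr_eq0. Qed.

Lemma dotv_bound n (a b : V n) : `|dotv a b| <= n%:R * normv a * normv b.
Proof.
rewrite /dotv; apply: le_trans (ler_norm_sum _ _ _) _.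
have -> : n%:R * normv a * normv b = \sum_(i < n) (normv a * normv b).
  by rewrite sumr_const card_ord -mulrA mulr_natl.
apply: ler_sum => i _; rewrite normrM.
by apply: ler_pM => //; apply: normv_entry.
Qed.

Lemma dotv_bound1 n (a b : V n) : `|dotv a b| <= (n%:R + 1) * normv a * normv b.
Proof.
apply: le_trans (dotv_bound a b) _.
by rewrite -!mulrA ler_wpM2r ?mulr_ge0 ?normv_ge0 // lerDl.
Qed.

Definition cM m n (M : 'M[R]_(m, n)) : R := \sum_i \sum_j `|M i j|.

Lemma cM_ge0 m n (M : 'M[R]_(m, n)) : 0 <= cM M.
Proof. by apply: sumr_ge0 => i _; apply: sumr_ge0. Qed.

Lemma normv_mul m n (M : 'M[R]_(m, n)) (a : V n) : normv (M *m a) <= cM M * normv a.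
Proof.
apply: normv_le; first by rewrite mulr_ge0 ?cM_ge0 ?normv_ge0.
move=> i; rewrite mxE; apply: le_trans (ler_norm_sum _ _ _) _.
apply: le_trans (_ : \sum_j `|M i j| * normv a <= _).
  apply: ler_sum => j _; rewrite normrM ler_wpM2l //; exact: normv_entry.
rewrite -mulr_suml ler_wpM2r ?normv_ge0 // /cM (bigD1 i) //= lerDl.
by apply: sumr_ge0 => k _; apply: sumr_ge0.
Qed.

Lemma geninv m n (M : 'M[R]_(m, n)) : exists B : 'M[R]_(n, m), M *m B *m M = M.
Proof. by exists (pinvmx M); rewrite mulmxKpV. Qed.

End Aux.


Section EVT.
Variable R : realType.
Local Notation V n := 'cV[R]_n.

Lemma mnorm_entry p q (M : 'M[R]_(p, q)) i j : `|M i j| <= `|M|.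
Proof.
rewrite (_ : `|M| = mx_norm M) // mx_normrE.
by apply/bigmax_geP; right => /=; exists (i, j).
Qed.

Lemma mnorm_le p q (M : 'M[R]_(p, q)) c : 0 <= c -> (forall i j, `|M i j| <= c) -> `|M| <= c.
Proof.
move=> c0 H; rewrite (_ : `|M| = mx_norm M) // mx_normrE.
by apply/bigmax_leP; split => // -[i j] _ /=.
Qed.

Lemma mnorm_tr p q (M : 'M[R]_(p, q)) : `|M^T| = `|M|.
Proof.
apply/eqP; rewrite eq_le; apply/andP; split; apply: mnorm_le => // i j.
  by rewrite mxE; exact: mnorm_entry.
have -> : M i j = M^T j i by rewrite mxE.
exact: mnorm_entry.
Qed.

Definition ctsv m (f : V m -> R) := forall a e, 0 < e -> exists del, 0 < del /\
  forall b, normv (b - a) < del -> `|f b - f a| < e.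

Lemma evt_min m (f : V m -> R) (A : set (V m)) :
  (exists z, A z) -> (exists M, forall z, A z -> normv z <= M) ->
  (forall z, (forall e, 0 < e -> exists y, A y /\ normv (y - z) < e) -> A z) ->
  ctsv f -> exists c, A c /\ forall z, A z -> f c <= f z.
Proof.
move=> [z0 Az0] [M HM] Hcl Hf.
pose A' := [set r : 'rV[R]_m | A r^T].
pose f' := fun r : 'rV[R]_m => f r^T.
have A'0 : A' !=set0 by exists z0^T; rewrite /A' /= trmxK.
have cA' : compact A'.
  apply: bounded_closed_compact.
    exists M; split; first by rewrite num_real.
    move=> N MN r /= Ar; rewrite -mnorm_tr; apply: (le_trans (HM _ Ar)); exact: ltW.
  move=> p /= Hp; apply: Hcl => e e0.
  have [y [Ay bpy]] := Hp _ (nbhsx_ballx p e e0).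
  exists y^T; split => //.
  rewrite /normv -linearB mnorm_tr -normrN opprB.
  by move: bpy; rewrite -ball_normE /=.
have cf : {within A', continuous f'}.
  apply: continuous_subspaceT => r; apply/(@cvgrPdist_lt _ _ _ (nbhs r) _) => e e0.
  have [del [del0 Hdel]] := Hf r^T e e0.
  apply/nbhs_ballP; exists del => //= y /= ry.
  rewrite /f' distrC; apply: Hdel.
  move: ry; rewrite -ball_normE /=.
  by rewrite /normv -linearB mnorm_tr -normrN opprB.
have [c cA Hc] := compact_EVT_min A'0 cA' cf.
exists c^T; split; first by move: cA; rewrite inE.
move=> z Az; have := Hc z^T; rewrite /f' trmxK; apply.
by rewrite inE /A' /= trmxK.
Qed.

End EVT.


Section Gen.
Variable R : realType.
Local Notation V n := 'cV[R]_n.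

Lemma le_eps (x y c : R) : 0 <= c -> (forall e, 0 < e -> x <= y + e * c) -> x <= y.
Proof.
move=> c0 H; apply/ler_addgt0Pr => e e0.
have c1 : 0 < c + 1 by lra.
apply: (le_trans (H (e / (c + 1)) (divr_gt0 e0 c1))).
rewrite lerD2l mulrAC ler_pdivrMr //; nra.
Qed.

Lemma grad_cts n (k : V n -> R) : (forall a, exists G, is_gradient k a G) -> ctsv k.
Proof.
move=> Hk a e e0; have [G HG] := Hk a.
have [del1 [del10 Hd]] := HG 1 ltr01.
set K := (n%:R + 1) * normv G + 1.
have K0 : 0 < K by rewrite /K ltr_wpDl ?mulr_ge0 ?normv_ge0 // addr_ge0.
exists (Num.min del1 (e / K)); split; first by rewrite lt_min del10 divr_gt0.
move=> b; rewrite lt_min => /andP[bd1 bdK].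
have := Hd (b - a) I bd1; rewrite [a + _]addrC subrK mul1r => H1.
have H2 := dotv_bound1 G (b - a).
have H3 : normv (b - a) * K < e by rewrite -ltr_pdivlMr.
have N0 := normv_ge0 (b - a).
rewrite /K in H3.
have H4 : `|k b - k a| <= `|k b - k a - dotv G (b - a)| + `|dotv G (b - a)|.
  by rewrite -[X in `|X| <= _](subrK (dotv G (b - a))) ler_normD.
move: H1 H2 H3 H4 N0.
set x := `|k b - k a|; set y := `|_ - dotv G _|; set d := `|dotv G _|; set N := normv (b - a).
set c := (n%:R + 1) * normv G.
lra.
Qed.

Lemma grad_uniq n (k : V n -> R) a G1 G2 :
  is_gradient k a G1 -> is_gradient k a G2 -> G1 = G2.
Proof.
move=> H1 H2; apply/eqP; rewrite -subr_eq0; apply/eqP/matrixP => i j.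
rewrite (ord1 j) [RHS]mxE; apply/eqP; rewrite -normr_le0.
apply: (@le_eps _ _ 2) => // e e0; rewrite add0r.
have [d1 [d10 Hd1]] := H1 e e0; have [d2 [d20 Hd2]] := H2 e e0.
set t := Num.min d1 d2 / 2.
have t0 : 0 < t by rewrite divr_gt0 // lt_min d10.
have td : t < Num.min d1 d2 by rewrite /t ltr_pdivrMr //; rewrite mulr_natr mulr2n ltrDr lt_min d10.
set h := t *: (delta_mx i 0 : V n).
have nd : normv (delta_mx i 0 : V n) <= 1.
  apply: normv_le => // k0; rewrite mxE; case: (_ && _) => /=; rewrite ?normr1 ?normr0 //.
have nh : normv h <= t by rewrite /h normvZ (ger0_norm (ltW t0)); nra.
have nhd : normv h < Num.min d1 d2 by apply: le_lt_trans td.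
move: nhd; rewrite lt_min => /andP[nh1 nh2].
have A1 := Hd1 h I nh1; have A2 := Hd2 h I nh2.
have E : dotv (G1 - G2) h = t * (G1 - G2) i 0 by rewrite /h dotvZr dotv_delta.
move: E; rewrite dotvBl => E.
set z := (G1 - G2) i 0 in E *.
set u := k (a + h) - k a in A1 A2.
have : `|t * z| <= 2 * e * normv h.
  rewrite -E; have := ler_normD (u - dotv G2 h) (- (u - dotv G1 h)).
  rewrite normrN; rewrite (_ : u - dotv G2 h + - (u - dotv G1 h) = dotv G1 h - dotv G2 h); last by ring.
  lra.
rewrite normrM (ger0_norm (ltW t0)).
move=> H; have : t * `|z| <= t * (e * 2).
  nra.
by rewrite ler_pM2l.
Qed.

End Gen.


Section Convex.
Variable R : realType.
Variable n : nat.
Local Notation V := 'cV[R]_n.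
Variables (phi : V -> R) (g : V -> V).
Hypothesis Hsc : strictly_convex_mod setT (@eq _) phi.
Hypothesis Hg : forall a, is_gradient phi a (g a).
Hypothesis Hcoer : coercive_on setT (@normv R n) phi.
Hypothesis Hev : forall f, phi (- f) = phi f.
Hypothesis H0 : phi 0 = 0.

Lemma conv_le a b t : 0 <= t <= 1 ->
  phi (t *: b + (1 - t) *: a) <= t * phi b + (1 - t) * phi a.
Proof.
move=> /andP[t0 t1].
have [->|tn0] := eqVneq t 0.
  by rewrite scale0r add0r subr0 scale1r mul0r add0r mul1r.
have [->|tn1] := eqVneq t 1.
  by rewrite scale1r subrr scale0r addr0 mul1r mul0r addr0.
have [->|ab] := eqVneq a b.
  have -> : t *: b + (1 - t) *: b = b by vecid.
  lra.
apply: ltW; apply: Hsc => //; first by move=> E; move: ab; rewrite E eqxx.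
by rewrite lt_def tn0 t0 /= lt_def t1 andbT eq_sym.
Qed.

Lemma grad_ineq a b : phi a + dotv (g a) (b - a) <= phi b.
Proof.
set d := b - a; set N := normv d.
have N0 : 0 <= N by apply: normv_ge0.
apply: (le_eps N0) => e e0.
have [del [del0 Hdel]] := Hg a e0.
pose t := del / (del + N + 1).
have K0 : 0 < del + N + 1 by lra.
have tK : t * (del + N + 1) = del by rewrite /t mulfVK // gt_eqF.
have t0 : 0 < t by rewrite /t divr_gt0.
have t1 : t < 1 by nra.
have tN : t * N < del by nra.
have nh : normv (t *: d) = t * N by rewrite normvZ ger0_norm // ltW.
have := Hdel (t *: d) I; rewrite nh => /(_ tN).
have -> : a + t *: d = t *: b + (1 - t) *: a by rewrite /d; vecid.
rewrite dotvZr.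
have := conv_le a b (t := t); rewrite ltW //= ltW // => /(_ isT).
set P := phi (t *: b + _).
rewrite ler_norml => Hc /andP[H1 H2].
nra.
Qed.

Lemma grad_strict a b : a != b -> phi a + dotv (g a) (b - a) < phi b.
Proof.
move=> ab.
set m := (1/2) *: b + (1 - 1/2) *: a.
have Hm : phi m < 1/2 * phi b + (1 - 1/2) * phi a.
  apply: Hsc => //; first by move=> E; move: ab; rewrite E eqxx.
  apply/andP; split; lra.
have := grad_ineq a m.
have -> : m - a = (1/2) *: (b - a) by rewrite /m; vecid.
rewrite dotvZr; lra.
Qed.

Lemma phi_ge0 f : 0 <= phi f.
Proof.
have := grad_ineq 0 f; have := grad_ineq 0 (- f).
rewrite Hev H0 !subr0 dotvNr; lra.
Qed.

Lemma lin_grad (c : V) a : is_gradient (fun f => phi f + dotv c f) a (g a + c).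
Proof.
move=> e e0; have [del [del0 H]] := Hg a e0; exists del; split => // h Dh hd.
have := H h Dh hd; rewrite dotvDl dotvDr.
by rewrite (_ : _ + _ - _ - _ = phi (a + h) - phi a - dotv (g a) h) //; ring.
Qed.

Lemma lin_cts (c : V) : ctsv (fun f => phi f + dotv c f).
Proof. by apply: grad_cts => a; exists (g a + c); apply: lin_grad. Qed.

Lemma comp_cts m (k : V -> R) (M : 'M[R]_(n, m)) : ctsv k -> ctsv (fun u => k (M *m u)).
Proof.
move=> Hk a e e0; have [del [del0 H]] := Hk (M *m a) e e0.
have c1 : 0 < cM M + 1 by have := cM_ge0 M; lra.
exists (del / (cM M + 1)); split; first by rewrite divr_gt0.
move=> b bd; apply: H; rewrite -mulmxBr.
apply: le_lt_trans (normv_mul _ _) _.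
move: bd; rewrite ltr_pdivlMr // => bd.
have := cM_ge0 M; have := normv_ge0 (b - a); nra.
Qed.

Lemma min_sub m (M : 'M[R]_(n, m)) (k : V -> R) : ctsv k ->
  (exists r, forall w, r < normv w -> k 0 < k w) ->
  exists u0, forall u, k (M *m u0) <= k (M *m u).
Proof.
move=> Hk [r Hr].
have [B HB] := geninv M.
set r' := Num.max r 0.
set K := cM B * r'.
have K0 : 0 <= K by rewrite mulr_ge0 ?cM_ge0 // le_max lexx orbT.
have E1 : exists z : 'cV[R]_m, [set u | normv u <= K] z by exists 0; rewrite /= normv0.
have E2 : exists M0, forall z : 'cV[R]_m, [set u | normv u <= K] z -> normv z <= M0 by exists K.
have E3 : forall z : 'cV[R]_m, (forall e, 0 < e -> exists y, [set u | normv u <= K] y /\ normv (y - z) < e) -> [set u | normv u <= K] z.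
  move=> z Hz /=; apply/ler_addgt0Pr => e e0.
  have [y [/= yK yz]] := Hz e e0.
  have := normvD y (z - y); rewrite addrC subrK.
  by move: yz; rewrite -normvN opprB; lra.
have [c [Ac Hc]] := evt_min E1 E2 E3 (comp_cts M Hk).
exists c => u.
have [wr|wr] := leP (normv (M *m u)) r'.
  have := Hc (B *m (M *m u)); rewrite !mulmxA HB; apply => /=.
  rewrite -mulmxA; apply: le_trans (normv_mul _ _) _.
  by rewrite ler_wpM2l ?cM_ge0.
apply: le_trans (ltW (Hr _ _)).
  by have := Hc 0; rewrite mulmx0 /= normv0; apply.
by apply: le_lt_trans wr; rewrite le_max lexx.
Qed.

Lemma first_order (k : V -> R) a G (w : V) : is_gradient k a G ->
  (forall t, 0 < t -> k a <= k (a + t *: w)) -> 0 <= dotv G w.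
Proof.
move=> HG Hw; set N := normv w.
have N0 : 0 <= N by apply: normv_ge0.
apply: (le_eps N0) => e e0.
have [del [del0 H]] := HG e e0.
pose t := del / (N + 1).
have t0 : 0 < t by rewrite /t divr_gt0 //; lra.
have tK : t * (N + 1) = del by rewrite /t mulfVK // gt_eqF //; lra.
have nh : normv (t *: w) = t * N by rewrite normvZ ger0_norm // ltW.
have := H (t *: w) I; rewrite nh => /(_ ltac:(nra)).
rewrite dotvZr ler_norml => /andP[H1 H2].
have := Hw t t0.
nra.
Qed.


Lemma coer_lin (c : V) : exists r, forall w, r < normv w ->
  phi 0 + dotv c 0 < phi w + dotv c w.
Proof.
have [r Hr] := Hcoer ((n%:R + 1) * normv c + 1).
exists (Num.max r 0) => w; rewrite gt_max => /andP[rw w0].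
have := Hr w I rw; rewrite ltr_pdivlMr // => H.
have := dotv_bound1 c w; rewrite H0 dotv0r ler_norml => /andP[H1 _].
lra.
Qed.

Lemma crit (c : V) m (M : 'M[R]_(n, m)) :
  exists u0, forall u, dotv (g (M *m u0) + c) (M *m u) = 0.
Proof.
have [u0 Hu0] := min_sub M (lin_cts c) (coer_lin c).
exists u0 => u.
have key : forall u, 0 <= dotv (g (M *m u0) + c) (M *m u).
  move=> u'; apply: (first_order (lin_grad c (M *m u0))) => t t0.
  rewrite /=. have -> : M *m u0 + t *: (M *m u') = M *m (u0 + t *: u') by rewrite mulmxDr scalemxAr. exact: Hu0.
apply/eqP; rewrite eq_le key andbT.
by have := key (- u); rewrite mulmxN dotvNr oppr_ge0.
Qed.

Lemma surj j : exists a, g a = j.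
Proof.
have [u0 Hu0] := crit (- j) (1%:M : 'M[R]_n).
exists u0; apply/eqP; rewrite -subr_eq0; apply/eqP; apply: dotv_eq0 => w.
by have := Hu0 w; rewrite !mul1mx.
Qed.

Lemma Psi_ge j f : dotv j f - phi f <= conj phi j.
Proof.
have [a ga] := surj j.
apply: ub_le_sup; last by exists f.
exists (dotv j a - phi a) => _ [f' _ <-].
have := grad_ineq a f'; rewrite ga dotvBr; lra.
Qed.

Lemma Psi_eq a : conj phi (g a) = dotv (g a) a - phi a.
Proof.
apply/eqP; rewrite eq_le Psi_ge andbT; apply: ge_sup; first by exists (dotv (g a) 0 - phi 0); exists 0.
move=> _ [f' _ <-]; have := grad_ineq a f'; rewrite dotvBr; lra.
Qed.

Lemma Psi_strict a f : f != a -> dotv (g a) f - phi f < conj phi (g a).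
Proof.
move=> fa; rewrite Psi_eq; have := grad_strict (a := a) (b := f); rewrite eq_sym fa dotvBr => /(_ isT); lra.
Qed.


Lemma Psi_ge0 j : 0 <= conj phi j.
Proof. by have := Psi_ge j 0; rewrite dotv0r H0 subr0. Qed.

Lemma Psi0 : conj phi 0 = 0.
Proof.
have [a ga] := surj 0; apply/eqP; rewrite eq_le Psi_ge0 andbT.
by rewrite -ga Psi_eq ga dotv0l sub0r oppr_le0 phi_ge0.
Qed.

Lemma Psi_even j : conj phi (- j) = conj phi j.
Proof.
have [a ga] := surj j; have [b gb] := surj (- j).
have h1 := Psi_ge (- j) (- a); have h2 := Psi_ge j (- b).
move: h1 h2; rewrite !Hev dotvNl dotvNr opprK.
move=> h1 h2.
have e1 : conj phi j = dotv j a - phi a by rewrite -{1}ga Psi_eq ga.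
have e2 : conj phi (- j) = - dotv j b - phi b by rewrite -{1}gb Psi_eq gb dotvNl.
rewrite e1 e2; rewrite e2 in h1; rewrite e1 dotvNr in h2; apply/eqP; rewrite eq_le; apply/andP; split; lra.
Qed.

Lemma Psi_cvx j1 j2 t : j1 != j2 -> 0 < t < 1 ->
  conj phi (t *: j1 + (1 - t) *: j2) < t * conj phi j1 + (1 - t) * conj phi j2.
Proof.
move=> j12 /andP[t0 t1].
set m := t *: j1 + (1 - t) *: j2.
have [a ga] := surj m; have [a1 g1] := surj j1; have [a2 g2] := surj j2.
have mj1 : m != j1.
  apply/negP => /eqP E.
  have : (1 - t) *: (j2 - j1) = 0 by rewrite -[RHS](subrr m) {2}E /m; vecid.
  move/eqP; rewrite scaler_eq0 subr_eq0 => /orP[/eqP|/eqP E']; [lra|try (move/eqP: E'; rewrite subr_eq0 => /eqP E'); by rewrite E' eqxx in j12].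
have mj2 : m != j2.
  apply/negP => /eqP E.
  have : t *: (j1 - j2) = 0 by rewrite -[RHS](subrr m) {2}E /m; vecid.
  move/eqP; rewrite scaler_eq0 subr_eq0 => /orP[/eqP|/eqP E']; [lra|try (move/eqP: E'; rewrite subr_eq0 => /eqP E'); by rewrite E' eqxx in j12].
have aa1 : a != a1 by apply: contra mj1 => /eqP E; rewrite -ga -g1 E.
have aa2 : a != a2 by apply: contra mj2 => /eqP E; rewrite -ga -g2 E.
have s1 := Psi_strict aa1; have s2 := Psi_strict aa2.
move: s1 s2; rewrite g1 g2 -ga Psi_eq ga /m dotvDl !dotvZl => s1 s2.
nra.
Qed.

Lemma Psi_lower r : 0 <= r -> exists K, 0 <= K /\ forall j, r * normv j - K <= conj phi j.
Proof.
move=> r0.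
pose e (i : 'I_n) : V := r *: delta_mx i 0.
set K := \sum_i (phi (e i) + phi (- e i)).
have K0 : 0 <= K by apply: sumr_ge0 => i _; rewrite addr_ge0 ?phi_ge0.
have Ki : forall i, phi (e i) + phi (- e i) <= K.
  move=> i; rewrite /K (bigD1 i) //= lerDl.
  by apply: sumr_ge0 => k _; rewrite addr_ge0 ?phi_ge0.
exists K; split => // j.
have [nj0|nj0] := eqVneq (normv j) 0.
  by rewrite nj0 mulr0 sub0r; apply: le_trans (Psi_ge0 j); rewrite oppr_le0.
have [[i k] Hi] := @mx_norm_neq0 _ _ _ j nj0.
move: Hi; rewrite (ord1 k) /= => Hi.
have nE : normv j = `|j i 0| by [].
have p1 := phi_ge0 (e i); have p2 := phi_ge0 (- e i); have := Ki i.
have [ji|ji] := leP 0 (j i 0).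
  have := Psi_ge j (e i); rewrite /e dotvZr dotv_delta -/(e i).
  by rewrite nE ger0_norm //; nra.
have := Psi_ge j (- e i); rewrite /e dotvNr dotvZr dotv_delta -/(e i).
by rewrite nE ltr0_norm //; nra.
Qed.

Lemma Psi_grad a : is_gradient (conj phi) (g a) a.
Proof.
move=> e e0.
set j := g a.
pose psi := fun f => phi f + dotv (- j) f.
set nn := n%:R + 1 : R.
have nn0 : 0 < nn by rewrite /nn; have := ler0n R n; lra.
set dl := e / nn.
have dl0 : 0 < dl by rewrite divr_gt0.
have dlnn : dl * nn = e by rewrite /dl mulfVK // gt_eqF.
have [m [m0 Hm]] : exists m, 0 < m /\ forall p, normv (p - a) = dl -> m <= psi p - psi a.
  case: (pselect (exists p, normv (p - a) = dl)) => [[p0 Hp0]|none]; last first.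
    by exists 1; split => // p Hp; exfalso; apply: none; exists p.
  have E1 : exists z, [set p | normv (p - a) = dl] z by exists p0.
  have E2 : exists M0, forall z, [set p | normv (p - a) = dl] z -> normv z <= M0.
    exists (dl + normv a) => z /= Hz; rewrite -Hz.
    by have := normvD (z - a) a; rewrite subrK.
  have E3 : forall z, (forall e', 0 < e' -> exists y, [set p | normv (p - a) = dl] y /\ normv (y - z) < e') ->
      [set p | normv (p - a) = dl] z.
    move=> z Hz /=; apply/eqP; rewrite eq_le; apply/andP; split; apply/ler_addgt0Pr => e' e'0;
      have [y [/= Ay yz]] := Hz e' e'0.
      have := normvD (z - y) (y - a).
      rewrite (_ : z - y + (y - a) = z - a); last by vecid.
      by move: yz; rewrite -normvN opprB; lra.
    have := normvD (y - z) (z - a).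
    by rewrite (_ : y - z + (z - a) = y - a); [lra|vecid].
  have [c [Ac Hc]] := evt_min E1 E2 E3 (lin_cts (- j)).
  exists (psi c - psi a); split; last by move=> p Hp; have := Hc p Hp; rewrite /psi; lra.
  have ca : a != c.
    apply/negP => /eqP E; move: Ac; rewrite /= -E subrr normv0 => E'; lra.
  have := grad_strict ca; rewrite /psi -/j dotvNl dotvNl dotvBr; lra.
have grow : forall f, dl <= normv (f - a) -> m * normv (f - a) <= dl * (psi f - psi a).
  move=> f Hf; set N := normv (f - a).
  have N0 : 0 < N by rewrite /N; lra.
  set s := dl / N.
  have sN : s * N = dl by rewrite /s mulfVK // gt_eqF.
  have s0 : 0 < s by rewrite divr_gt0.
  have s1 : s <= 1 by rewrite /s ler_pdivrMr // mul1r.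
  have := Hm (s *: f + (1 - s) *: a).
  rewrite (_ : s *: f + (1 - s) *: a - a = s *: (f - a)); last by vecid.
  rewrite normvZ (ger0_norm (ltW s0)) sN => /(_ erefl).
  have := conv_le a f (t := s); rewrite ltW //= s1 => /(_ isT).
  rewrite /psi dotvDr !dotvZr.
  set X := psi f - psi a.
  move=> H1 H2.
  have H3 : m <= s * X by rewrite /X /psi; nra.
  have : m * N <= s * X * N by rewrite ler_wpM2r // ltW.
  by rewrite mulrAC sN mulrC.
exists (m / e); split; first by rewrite divr_gt0.
move=> h _ hd.
have [a' ga'] := surj (j + h).
have hm : normv h * e < m by rewrite -ltr_pdivlMr.
have ge1 := Psi_ge (j + h) a.
have ge2 := Psi_ge j a'.
have eq1 := Psi_eq a'; rewrite ga' in eq1.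
have eq2 := Psi_eq a; rewrite -/j in eq2.
have ineq1 : psi a' - psi a <= dotv h (a' - a).
  move: ge1; rewrite eq1 /psi !dotvNl dotvBr !dotvDl; lra.
have db := dotv_bound1 h (a' - a); rewrite -/nn in db.
move: db; rewrite ler_norml => /andP[_ db].
have hN0 := normv_ge0 h.
have close : normv (a' - a) < dl.
  rewrite ltNge; apply/negP => Hle.
  have := grow a' Hle; set N' := normv (a' - a).
  have N0 : 0 < N' by rewrite /N'; lra.
  move=> H.
  have H2 : dl * (psi a' - psi a) <= e * normv h * N'.
    have H2a : dl * (psi a' - psi a) <= dl * (nn * normv h * N') by rewrite ler_pM2l //; exact: le_trans ineq1 db.
    by move: H2a; rewrite !mulrA dlnn.
  nra.
have N0 := normv_ge0 (a' - a).
set D := conj phi (j + h) - conj phi j - dotv a h.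
have D0 : 0 <= D by rewrite /D eq2 (dotvC a h); move: ge1; rewrite dotvDl; lra.
have D1 : D <= dotv h (a' - a) by rewrite /D eq1 eq2 (dotvC a h) dotvBr dotvDl; move: ge2; lra.
rewrite ger0_norm //.
apply: (le_trans D1); apply: (le_trans db).
have : nn * normv h * normv (a' - a) <= nn * normv h * dl.
  have := mulr_ge0 (ltW nn0) hN0; nra.
move=> H; apply: (le_trans H); rewrite -dlnn; have := mulr_ge0 (ltW nn0) hN0; nra.
Qed.


Lemma glin (k : V -> R) f G p (L : 'M[R]_(n, p)) : is_gradient k f G ->
  forall eps, 0 < eps -> exists del, 0 < del /\ forall h : 'cV[R]_p, normv h < del ->
    `|k (f + L *m h) - k f - dotv G (L *m h)| <= eps * normv h.
Proof.
move=> HG eps e0.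
have c0 : 0 < cM L + 1 by have := cM_ge0 L; lra.
have [del [del0 H]] := HG (eps / (cM L + 1)) (divr_gt0 e0 c0).
exists (del / (cM L + 1)); split; first by rewrite divr_gt0.
move=> h hd.
have nL := normv_mul L h.
have hn := normv_ge0 h.
have cL := cM_ge0 L.
have nL2 : normv (L *m h) <= (cM L + 1) * normv h by nra.
have := H (L *m h) I.
have : normv (L *m h) < del.
  apply: le_lt_trans nL2 _; move: hd; rewrite ltr_pdivlMr //; lra.
move=> X /(_ X) H2; apply: (le_trans H2).
have : eps / (cM L + 1) * normv (L *m h) <= eps / (cM L + 1) * ((cM L + 1) * normv h).
  by rewrite ler_pM2l // divr_gt0.
by rewrite mulrA mulfVK // gt_eqF.
Qed.

Lemma grad_g j f : is_gradient (conj phi) j f -> g f = j.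
Proof.
move=> H; have [a ga] := surj j.
have H2 := Psi_grad a; rewrite ga in H2.
by rewrite (grad_uniq H H2).
Qed.

Lemma main_aux (NX : nat) (S : 'M[int]_(NX, n)) :
  let T := @ImS R _ _ S in
  let Psi := conj phi in
  let tP := tPsi S phi in
  let tPs := tPsistar S phi in
  let dtPs := dtPsistar S g in
  let dtP := is_dtPsi S phi in
      (forall v, T v -> exists j, is_jdag S Psi v j /\
          forall j', is_jdag S Psi v j' -> j' = j) /\
      (forall v, T v ->
          (exists u, tP v = dotv v u - tPs u) /\
          (forall u, dotv v u - tPs u <= tP v)) /\
      (forall u,
          (exists v, T v /\ tPs u = dotv v u - tP v) /\
          (forall v, T v -> dotv v u - tP v <= tPs u)) /\
      ([/\ (forall v, T v -> exists u, dtP v u),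
          (forall v u u', T v -> dtP v u -> dtP v u' -> equivT S u u'),
          (forall v u, T v -> dtP v u -> is_gradient_on T tP v u)
        & (forall u, T (dtPs u) /\ is_gradient tPs u (dtPs u))] /\
       (forall v u, T v -> dtP v u -> dtPs u = v)
         /\ (forall u, dtP (dtPs u) u)) /\
      [/\ strictly_convex_mod T (@eq _) tP,
          coercive_on T (@normv R NX) tP,
          (forall v, T v -> tP (- v) = tP v)
        & tP 0 = 0] /\
      [/\ strictly_convex_mod setT (equivT S) tPs,
          coercive_on setT (qnorm S) tPs,
          (forall u, tPs (- u) = tPs u)
        & tPs 0 = 0].
Proof.
move=> T Psi tP tPs dtPs dtP.
set A := @SR R _ _ S.
pose fu (u : 'cV[R]_NX) : V := - (A^T *m u).
have dotv_fu : forall (j : V) u, dotv j (fu u) = dotv (- (A *m j)) u.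
  by move=> j u; rewrite /fu dotvNr dotvNl dotv_mul.
have TE : forall v, T v <-> exists j, A *m j = v by [].
have dtPsE : forall u, dtPs u = - (A *m g (fu u)) by [].
have tPsE : forall u, tPs u = phi (fu u) by [].
have tPE : forall v, tP v = Psi (jdag S Psi v) by [].
have K1 : forall v, T v -> exists u0, dtPs u0 = v.
  move=> v [j1 <-].
  have [u0 Hu0] := crit j1 (- A^T).
  exists u0; rewrite dtPsE.
  have : A *m (g (fu u0) + j1) = 0.
    apply: dotv_eq0 => u; rewrite dotv_mul.
    by have := Hu0 (- u); rewrite !mulNmx mulmxN opprK.
  by rewrite mulmxDr => /eqP; rewrite addr_eq0 => /eqP ->; rewrite opprK.
have K2 : forall u, is_jdag S Psi (dtPs u) (g (fu u)).
  move=> u; split => // j' Hj'.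
  have := Psi_ge j' (fu u); rewrite /Psi Psi_eq !dotv_fu Hj'.
  by rewrite -dtPsE.
have K3 : forall v j1 j2, is_jdag S Psi v j1 -> is_jdag S Psi v j2 -> j1 = j2.
  move=> v j1 j2 [e1 m1] [e2 m2]; apply/eqP/negP => /negP j12.
  set m := (1/2) *: j1 + (1 - 1/2) *: j2.
  have em : - (A *m m) = v.
    rewrite /m mulmxDr -!scalemxAr.
    have -> : - ((1/2) *: (A *m j1) + (1 - 1/2) *: (A *m j2)) =
      (1/2) *: (- (A *m j1)) + (1 - 1/2) *: (- (A *m j2)) by vecid.
    by rewrite e1 e2; vecid.
  have := Psi_cvx j12 (t := 1/2) ltac:(apply/andP; split; lra).
  have := m1 _ em; have := m1 _ e2; have := m2 _ e1.
  rewrite -/m /Psi; lra.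
have jspec : forall v, T v -> is_jdag S Psi v (jdag S Psi v).
  move=> v /K1 [u0 <-]; rewrite /jdag; apply: epsilon_spec.
  by exists (g (fu u0)).
have jdagE : forall u, jdag S Psi (dtPs u) = g (fu u).
  move=> u; apply: (K3 (dtPs u)) => //; apply: jspec.
  by exists (- g (fu u)); rewrite mulmxN.
have K4 : forall u, tP (dtPs u) = dotv (dtPs u) u - tPs u.
  by move=> u; rewrite tPE jdagE /Psi Psi_eq dotv_fu -dtPsE.
have P2b : forall v, T v -> forall u, dotv v u - tPs u <= tP v.
  move=> v Tv u; have [e1 _] := jspec v Tv.
  by rewrite tPE tPsE; have := Psi_ge (jdag S Psi v) (fu u); rewrite dotv_fu e1.
have TA : forall j, T (A *m j) by move=> j; exists j.
have TN : forall v, T v -> T (- v) by move=> v [j <-]; exists (- j); rewrite mulmxN.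
have TdtPs : forall u, T (dtPs u) by move=> u; exists (- g (fu u)); rewrite mulmxN.
have P1 : forall v, T v -> exists j, is_jdag S Psi v j /\ forall j', is_jdag S Psi v j' -> j' = j.
  move=> v Tv; exists (jdag S Psi v); split; first exact: jspec.
  by move=> j' Hj'; apply: (K3 v) => //; apply: jspec.
have P2 : forall v, T v -> (exists u, tP v = dotv v u - tPs u) /\ (forall u, dotv v u - tPs u <= tP v).
  move=> v Tv; split; last exact: P2b.
  by have [u0 <-] := K1 v Tv; exists u0; apply: K4.
have P3 : forall u, (exists v, T v /\ tPs u = dotv v u - tP v) /\ (forall v, T v -> dotv v u - tP v <= tPs u).
  move=> u; split.
    by exists (dtPs u); split => //; rewrite K4; lra.
  by move=> v Tv; have := P2b v Tv u; lra.
have gradE : forall v u, T v -> dtP v u -> dtPs u = v.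
  move=> v u Tv H; have := grad_g H; rewrite dtPsE /fu => ->.
  by case: (jspec v Tv).
have P4a : forall v, T v -> exists u, dtP v u.
  move=> v Tv; have [u0 Hu0] := K1 v Tv; exists u0.
  by rewrite /dtP /is_dtPsi -Hu0 -/Psi jdagE; apply: Psi_grad.
have P4b : forall v u u', T v -> dtP v u -> dtP v u' -> equivT S u u'.
  move=> v u u' _ H1 H2; rewrite /equivT; apply: oppr_inj; exact: (grad_uniq H1 H2).
have P4c : forall v u, T v -> dtP v u -> is_gradient_on T tP v u.
  move=> v u Tv H eps e0.
  have [B HB] := geninv A.
  have [del [del0 Hdel]] := glin (- B) H e0.
  exists del; split => // h Th hd.
  have ev := gradE v u Tv H.
  set J := jdag S Psi v in H Hdel.
  have [eJ mJ] := jspec v Tv.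
  have Tvh : T (v + h) by case: Tv => [j1 <-]; case: Th => [j2 <-]; exists (j1 + j2); rewrite mulmxDr.
  have low := P2b (v + h) Tvh u.
  have eqv := K4 u; rewrite ev in eqv.
  have Lh : - (A *m (- B *m h)) = h.
    by case: Th => [j2 <-]; rewrite mulNmx mulmxN opprK !mulmxA HB.
  have up : tP (v + h) <= Psi (J + - B *m h).
    have [_ mvh] := jspec (v + h) Tvh; rewrite tPE; apply: mvh.
    by rewrite mulmxDr opprD eJ Lh.
  have dl : dotv u h = dotv (- (A^T *m u)) (- B *m h) by rewrite -/(fu u) (dotvC (fu u)) dotv_fu Lh dotvC.
  have := Hdel h hd; rewrite -/J.
  rewrite /Psi in up *; rewrite tPE -/J /Psi in eqv.
  move: low; rewrite dotvDl.
  set X := tP (v + h); set Y := conj phi (J + - B *m h).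
  rewrite ler_norml => low /andP[_ H2].
  have := normv_ge0 h.
  rewrite ger0_norm.
    by move=> _; rewrite tPE -/J /Psi dl; move: up H2; rewrite -/X -/Y; lra.
  by rewrite tPE -/J /Psi (dotvC u h); lra.
have P4d : forall u, T (dtPs u) /\ is_gradient tPs u (dtPs u).
  move=> u; split => // eps e0.
  have [del [del0 Hdel]] := glin (- A^T) (Hg (fu u)) e0.
  exists del; split => // h _ hd.
  have := Hdel h hd.
  have -> : fu u + - A^T *m h = fu (u + h) by rewrite /fu mulmxDr mulNmx opprD.
  by rewrite mulNmx -/(fu h) dotv_fu -dtPsE.
have P4e : forall u, dtP (dtPs u) u.
  by move=> u; rewrite /dtP /is_dtPsi -/Psi jdagE; apply: Psi_grad.
have P5a : strictly_convex_mod T (@eq _) tP.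
  move=> a b Ta Tb ab t /andP[t0 t1].
  have [ea ma] := jspec a Ta; have [eb mb] := jspec b Tb.
  set ja := jdag S Psi a in ea ma; set jb := jdag S Psi b in eb mb.
  have jab : ja != jb by apply/negP => /eqP E; apply: ab; rewrite -ea -eb E.
  set w := t *: a + (1 - t) *: b.
  set m := t *: ja + (1 - t) *: jb.
  have em : - (A *m m) = w.
    rewrite /m /w mulmxDr -!scalemxAr -ea -eb; vecid.
  have Tw : T w by rewrite -em; apply: TN; apply: TA.
  have [_ mw] := jspec w Tw.
  have := mw m em; have := Psi_cvx jab (t := t) ltac:(apply/andP; split; lra).
  by rewrite !tPE -/ja -/jb /Psi; lra.
have P5b : coercive_on T (@normv R NX) tP.
  move=> M.
  set cS := cM A + 1.
  have cS0 : 0 < cS by have := cM_ge0 A; rewrite /cS; lra.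
  have [K [K0 HK]] := Psi_lower (r := cS * (`|M| + 1)) ltac:(apply: mulr_ge0; [lra|]; have := normr_ge0 M; lra).
  exists K => v Tv Kv.
  have [ev _] := jspec v Tv.
  set J := jdag S Psi v in ev.
  have nv : normv v <= cS * normv J.
    rewrite -ev normvN; apply: le_trans (normv_mul _ _) _.
    by rewrite ler_wpM2r ?normv_ge0 // /cS lerDl.
  have := HK J; rewrite -/Psi => HJ.
  have nv0 : 0 < normv v by lra.
  rewrite ltr_pdivlMr // tPE -/J.
  have := normr_ge0 M; have := ler_norm M.
  nra.
have P5c : forall v, T v -> tP (- v) = tP v.
  have half : forall v, T v -> tP (- v) <= tP v.
    move=> v Tv; have [ev _] := jspec v Tv.
    have [_ mv] := jspec (- v) (TN v Tv).
    rewrite !tPE; apply: le_trans (mv (- jdag S Psi v) _) _.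
      by rewrite mulmxN opprK; apply: oppr_inj; rewrite opprK.
    by rewrite /Psi Psi_even.
  move=> v Tv; apply/eqP; rewrite eq_le half //=.
  by have := half (- v) (TN v Tv); rewrite opprK.
have P5d : tP 0 = 0.
  have T0 : T 0 by exists 0; rewrite mulmx0.
  have [_ m0] := jspec 0 T0.
  apply/eqP; rewrite eq_le tPE Psi_ge0 andbT.
  by rewrite -[X in _ <= X]Psi0; apply: m0; rewrite mulmx0 oppr0.
have P6a : strictly_convex_mod setT (equivT S) tPs.
  move=> a b _ _ ab t tt; rewrite !tPsE.
  have -> : fu (t *: a + (1 - t) *: b) = t *: fu a + (1 - t) *: fu b.
    by rewrite /fu mulmxDr -!scalemxAr; vecid.
  apply: Hsc => // E; apply: ab; rewrite /equivT; apply: oppr_inj; exact: E.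
have P6b : coercive_on setT (qnorm S) tPs.
  move=> M.
  have [B2 HB2] := geninv A^T.
  set c2 := cM B2 + 1.
  have c20 : 0 < c2 by have := cM_ge0 B2; rewrite /c2; lra.
  have [r0 Hr0] := Hcoer (c2 * `|M|).
  exists (c2 * Num.max r0 0) => u _ ru.
  set q := qnorm S u in ru *.
  have qle : q <= cM B2 * normv (fu u).
    have : q <= normv (B2 *m (A^T *m u)).
      apply: ge_inf.
        by exists 0 => _ [k [_ ->]]; apply: normv_ge0.
      exists (B2 *m (A^T *m u) - u); split.
        by rewrite mulmxBr !mulmxA HB2 subrr.
      by rewrite addrC subrK.
    move=> H; apply: (le_trans H); rewrite /fu normvN; exact: normv_mul.
  set N := normv (fu u) in qle.
  have N0 : 0 <= N by apply: normv_ge0.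
  have mx0 : 0 <= Num.max r0 0 by rewrite le_max lexx orbT.
  have q0 : 0 < q by have := mulr_ge0 (ltW c20) mx0; lra.
  have qc : q <= c2 * N by rewrite /c2; lra.
  have Nr : Num.max r0 0 < N.
    by rewrite -(ltr_pM2l c20); lra.
  move: Nr; rewrite gt_max => /andP[Nr Np].
  have := Hr0 (fu u) I Nr; rewrite ltr_pdivlMr // -/N => H.
  rewrite ltr_pdivlMr // tPsE.
  have := normr_ge0 M; have := ler_norm M.
  nra.
have P6c : forall u, tPs (- u) = tPs u.
  by move=> u; rewrite !tPsE /fu mulmxN opprK -[RHS]Hev opprK.
have P6d : tPs 0 = 0 by rewrite tPsE /fu mulmx0 oppr0 H0.
split; first exact: P1.
split; first exact: P2.
split; first exact: P3.
split; first by split; [split | split].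
by split; split.
Qed.

End Convex.

Theorem mainTheorem8 (R : realType) (NX Ne : nat) (S : 'M[int]_(NX, Ne))
  (Psistar : 'cV[R]_NX -> 'cV[R]_Ne -> R)
  (gradPsistar : 'cV[R]_NX -> 'cV[R]_Ne -> 'cV[R]_Ne)
  (Hdiss : forall x : 'cV[R]_NX, (forall i, 0 < x i 0) -> dissipation (Psistar x))
  (Hgrad : forall x : 'cV[R]_NX, (forall i, 0 < x i 0) ->
     forall f, is_gradient (Psistar x) f (gradPsistar x f))
  (x : 'cV[R]_NX) (Hx : forall i, 0 < x i 0) :
  let T := @ImS R _ _ S in
  let Psi := conj (Psistar x) in
  let tP := tPsi S (Psistar x) in
  let tPs := tPsistar S (Psistar x) in
  let dtPs := dtPsistar S (gradPsistar x) in
  let dtP := is_dtPsi S (Psistar x) in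
  (* j^dagger(x,v) is well defined: unique minimizer *)
      (forall v, T v -> exists j, is_jdag S Psi v j /\
          forall j', is_jdag S Psi v j' -> j' = j) /\
      (* tilde Psi_x (v) = max_u [<v,u> - tilde Psi*_x (u)] *)
      (forall v, T v ->
          (exists u, tP v = dotv v u - tPs u) /\
          (forall u, dotv v u - tPs u <= tP v)) /\
      (* tilde Psi*_x (u) = max_{v in T} [<v,u> - tilde Psi_x (v)] *)
      (forall u,
          (exists v, T v /\ tPs u = dotv v u - tP v) /\
          (forall v, T v -> dotv v u - tP v <= tPs u)) /\
      (* Legendre transformations: well defined, gradients, mutually inverse *)
      ([/\ (forall v, T v -> exists u, dtP v u),
          (forall v u u', T v -> dtP v u -> dtP v u' -> equivT S u u'),
          (forall v u, T v -> dtP v u -> is_gradient_on T tP v u)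
        & (forall u, T (dtPs u) /\ is_gradient tPs u (dtPs u))] /\
       (forall v u, T v -> dtP v u -> dtPs u = v)
         /\ (forall u, dtP (dtPs u) u)) /\
      (* tilde Psi_x is a dissipation function on T *)
      [/\ strictly_convex_mod T (@eq _) tP,
          coercive_on T (@normv R NX) tP,
          (forall v, T v -> tP (- v) = tP v)
        & tP 0 = 0] /\ (* tilde Psi*_x is a dissipation function on R^NX / Ker S^T *)
      [/\ strictly_convex_mod setT (equivT S) tPs,
          coercive_on setT (qnorm S) tPs,
          (forall u, tPs (- u) = tPs u)
        & tPs 0 = 0].

Proof.
have [Hsc [G [_ _]] Hcoer Hev H0] := Hdiss x Hx.
exact: (main_aux Hsc (Hgrad x Hx) Hcoer Hev H0 S).
Qed.
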